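(* Let $[x]t$ be a normal planar term (NPT) with $R$-coloring $\pi$. Then exactly one of the following cases holds: (i) $[x]t$ is the identity term ($t=x$) and $|\pi| = |\mathrm{ONH}(\pi)| = 1$; (ii) $[x]t = \mathrm{FO}([x_1]t_1,[x_2]t_2)$ for some NPTs $[x_1]t_1$ and $[x_2]t_2$ with $R$-colorings $\pi_1,\pi_2$ such that $|\pi| = |\pi_1|+|\pi_2|$ and $|\mathrm{ONH}(\pi)| = 1 + |\mathrm{ONH}(\pi_1)| + |\mathrm{ONH}(\pi_2)|$; (iii) $[x]t = \mathrm{VO}_k([x_1]t_1)$ for some NPT $[x_1]t_1$ with $R$-coloring $\pi_1$ and some $1\le k\le |\mathrm{ONH}(\pi_1)|$ such that $|\pi| = 1+|\pi_1|$ and $|\mathrm{ONH}(\pi)| = k+1$.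
   Context: Lambda skeletons: graded sets $\mathrm{SLam}(i)$, least such that $\_ \in \mathrm{SLam}(1)$; $p\in\mathrm{SLam}(j), q\in\mathrm{SLam}(k)\Rightarrow p(q)\in\mathrm{SLam}(j+k)$; $p\in\mathrm{SLam}(i+1)\Rightarrow \lambda\_.p\in\mathrm{SLam}(i)$. A planar lambda term with ordered list of free variables $\Gamma$ decorating $p$, written $[\Gamma]t\in\Lambda_1^0(p)$, is defined by: $[x]x\in\Lambda_1^0(\_)$; from $[\Gamma]t\in\Lambda_1^0(p)$, $[\Delta]u\in\Lambda_1^0(q)$ infer $[\Gamma,\Delta]t(u)\in\Lambda_1^0(p(q))$; from $[x,\Gamma]t\in\Lambda_1^0(p)$ infer $[\Gamma]\lambda x.t\in\Lambda_1^0(\lambda\_.p)$; terms are considered modulo renaming of variables. Colorings: $\mathrm{SNeu}(i)$ (blue) and $\mathrm{SNF}(i)$ (red) are defined by rules (v) $\_\in\mathrm{SNeu}(1)$; (a) $p\in\mathrm{SNeu}(j)$, $q\in\mathrm{SNF}(k)\Rightarrow p(q)\in\mathrm{SNeu}(j+k)$; (s) $p\in\mathrm{SNeu}(i)\Rightarrow p\in\mathrm{SNF}(i)$; ($\ell$) $p\in\mathrm{SNF}(i+1)\Rightarrow\lambda\_.p\in\mathrm{SNF}(i)$. A $B$-coloring (resp. $R$-coloring) of a term is a derivation of its skeleton in $\mathrm{SNeu}$ (resp. $\mathrm{SNF}$); neutral/normal terms are those having one. The size $|\pi|$ of a coloring $\pi$ is the number of uses of rule (s). An NPT is a normal planar term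 $[x]t$ with exactly one free variable. Outer neutral handles: a neutral handle of a term is a decomposition of it as a context with one marked occurrence of a neutral subterm, written $C[\langle n\rangle]$. For a neutral or normal planar term $[\Gamma]t$ with coloring $\pi$, the ordered list $\mathrm{ONH}(\pi)$ is defined by induction: if $\pi$ is rule (v) for $[x]x$, $\mathrm{ONH}(\pi)=(\langle x\rangle)$; if $\pi$ ends with rule (a) deriving $[\Gamma,\Delta]t(u)$ from a $B$-coloring $\pi_1$ of $[\Gamma]t$ and an $R$-coloring $\pi_2$ of $[\Delta]u$, then $\mathrm{ONH}(\pi)$ is $\langle t(u)\rangle$, followed by $t(H)$ for each $H$ in $\mathrm{ONH}(\pi_2)$ in order, followed — only when $\Delta$ is empty — by $H(u)$ for each $H$ in $\mathrm{ONH}(\pi_1)$ in order; if $\pi$ ends with rule (s) applied to $\pi_1$, $\mathrm{ONH}(\pi)=\mathrm{ONH}(\pi_1)$; if $\pi$ ends with rule ($\ell$) deriving $[\Gamma]\lambda x.t$ from $\pi_1$ for $[x,\Gamma]t$, $\mathrm{ONH}(\pi)$ is $\lambda x.H$ for each $H$ in $\mathrm{ONH}(\pi_1)$ in order. $|\mathrm{ONH}(\pi)|$ is its length. Operations: $\mathrm{FO}([x_1]t_1,[x_2]t_2)$ is the NPT $[x_1]t_1'$ where $t_1'$ is obtained from $t_1$ by replacing the unique occurrence of $x_1$ by $x_1(\lambda x_2.t_2)$. For an NPT $[x_1]t_1$ with $R$-coloring $\pi_1$ and $1\le k\le|\mathrm{ONH}(\pi_1)|$, if the $k$-th element of $\mathrm{ONH}(\pi_1)$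 is $t_1 = C[\langle n\rangle]$, then $\mathrm{VO}_k([x_1]t_1)$ is the NPT $[x]\lambda x_1.C[n(x)]$ for a fresh variable $x$. *)

(* Defs.v *)
From mathcomp Require Import all_boot.
Set Implicit Arguments. Unset Strict Implicit. Unset Printing Implicit Defensive.

(* Planar lambda terms modulo renaming, in nameless form.
   A planar term [Gamma]t is determined (up to renaming) by its skeleton:
   every variable occurrence is the unique variable of its sub-context, and
   [lam] binds the first variable of the body's context.  So a term is
   represented by its skeleton; [Var] is the skeleton "_" (an occurrence). *)
Inductive tm : Type :=
| Var : tm
| App : tm -> tm -> tm
| Lam : tm -> tm.

Inductive SLam : nat -> tm -> Prop :=
| SLam_v : SLam 1 Var
| SLam_a j k p q : SLam j p -> SLam k q -> SLam (j + k) (App p q)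
| SLam_l i p : SLam i.+1 p -> SLam i (Lam p).

(* Colorings: derivations (proof-relevant, in Type) of SNeu / SNF. *)
Inductive SNeu : nat -> tm -> Type :=
| rule_v : SNeu 1 Var
| rule_a j k p q : SNeu j p -> SNF k q -> SNeu (j + k) (App p q)
with SNF : nat -> tm -> Type :=
| rule_s i p : SNeu i p -> SNF i p
| rule_l i p : SNF i.+1 p -> SNF i (Lam p).

Fixpoint size_neu i p (pi : SNeu i p) : nat :=
  match pi with
  | rule_v => 0
  | rule_a _ _ _ _ pi1 pi2 => size_neu pi1 + size_nf pi2
  end
with size_nf i p (pi : SNF i p) : nat :=
  match pi with
  | rule_s _ _ pi1 => (size_neu pi1).+1
  | rule_l _ _ pi1 => size_nf pi1
  end.

Inductive ctx : Type :=
| Hole : ctx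
| CAppL : ctx -> tm -> ctx
| CAppR : tm -> ctx -> ctx
| CLam : ctx -> ctx.

Fixpoint plug (C : ctx) (s : tm) : tm :=
  match C with
  | Hole => s
  | CAppL C u => App (plug C s) u
  | CAppR t C => App t (plug C s)
  | CLam C => Lam (plug C s)
  end.

Definition handle := (ctx * tm)%type.

Fixpoint onh_neu i p (pi : SNeu i p) : seq handle :=
  match pi with
  | rule_v => [:: (Hole, Var)]
  | rule_a _ k t u pi1 pi2 =>
      (Hole, App t u)
        :: [seq (CAppR t h.1, h.2) | h <- onh_nf pi2]
        ++ (if k == 0 then [seq (CAppL h.1 u, h.2) | h <- onh_neu pi1]
            else [::])
  end
with onh_nf i p (pi : SNF i p) : seq handle :=
  match pi with
  | rule_s _ _ pi1 => onh_neu pi1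
  | rule_l _ _ pi1 => [seq (CLam h.1, h.2) | h <- onh_nf pi1]
  end.

Fixpoint nfv (t : tm) : nat :=
  match t with
  | Var => 1
  | App t u => nfv t + nfv u
  | Lam t => (nfv t).-1
  end.

(* Replace the j-th free variable (0-based, in context order) of t by s. *)
Fixpoint repl (j : nat) (t : tm) (s : tm) : tm :=
  match t with
  | Var => if j == 0 then s else Var
  | App t u => if j < nfv t then App (repl j t s) u
               else App t (repl (j - nfv t) u s)
  | Lam t => Lam (repl j.+1 t s)
  end.

(* FO([x1]t1,[x2]t2) = [x1] t1{x1 := x1(lambda x2.t2)} *)
Definition FO (t1 t2 : tm) : tm := repl 0 t1 (App Var (Lam t2)).

(* VO_k([x1]t1) = [x] lambda x1. C[n(x)] where the k-th (1-based)
   element of ONH(pi1) is C[<n>]. *)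
Definition VO (k : nat) (t1 : tm) (pi1 : SNF 1 t1) : tm :=
  let h := nth (Hole, Var) (onh_nf pi1) k.-1 in
  Lam (plug h.1 (App h.2 Var)).

Definition exactly_one3 (A B C : Prop) : Prop :=
  (A \/ B \/ C) /\ ~ (A /\ B) /\ ~ (A /\ C) /\ ~ (B /\ C).

(* Main.v *)
Require Import Defs.
From mathcomp Require Import all_boot zify.

Scheme neu_ind := Induction for SNeu Sort Prop
with nf_ind := Induction for SNF Sort Prop.

Lemma grade_all :
  (forall n t (pi : SNeu n t), nfv t = n /\ 0 < n) /\
  (forall n t (pi : SNF n t), nfv t = n).
Proof.
split.
- apply: (neu_ind (fun n t _ => nfv t = n /\ 0 < n) (fun n t _ => nfv t = n)) => //=.
  + move=> j k p q _ [-> Hj] _ ->; split => //; lia.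
  + by move=> i p _ [].
  + by move=> i p _ ->.
- apply: (nf_ind (fun n t _ => nfv t = n /\ 0 < n) (fun n t _ => nfv t = n)) => //=.
  + move=> j k p q _ [-> Hj] _ ->; split => //; lia.
  + by move=> i p _ [].
  + by move=> i p _ ->.
Qed.

Lemma nfv_neu {n t} (pi : SNeu n t) : nfv t = n.
Proof. exact: (grade_all.1 _ _ pi).1. Qed.
Lemma pos_neu {n t} (pi : SNeu n t) : 0 < n.
Proof. exact: (grade_all.1 _ _ pi).2. Qed.
Lemma nfv_nf {n t} (pi : SNF n t) : nfv t = n.
Proof. exact: (grade_all.2 _ _ pi). Qed.

Definition hd0 : handle := (Hole, Var).
Definition ins (h : handle) := plug h.1 (App h.2 Var).

Definition Dneu {n t} (pi : SNeu n t) : Prop :=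
  (t = Var /\ n = 1 /\ size_neu pi = 0 /\ size (onh_neu pi) = 1) \/
  (exists m t1 t2 (pi1 : SNeu m t1) (pi2 : SNF 1 t2), m = n /\
     t = repl n.-1 t1 (App Var (Lam t2)) /\
     size_neu pi = size_neu pi1 + size_nf pi2 /\
     size (onh_neu pi) = 1 + size (onh_neu pi1) + size (onh_nf pi2)) \/
  (exists m t1 (pi1 : SNeu m t1) k, m.+1 = n /\ 1 <= k <= size (onh_neu pi1) /\
     t = ins (nth hd0 (onh_neu pi1) k.-1) /\
     size_neu pi = 1 + size_neu pi1 /\ size (onh_neu pi) = k + 1).

Definition Dnf {n t} (pi : SNF n t) : Prop := 0 < n ->
  (t = Var /\ n = 1 /\ size_nf pi = 1 /\ size (onh_nf pi) = 1) \/
  (exists m t1 t2 (pi1 : SNF m t1) (pi2 : SNF 1 t2), m = n /\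
     t = repl n.-1 t1 (App Var (Lam t2)) /\
     size_nf pi = size_nf pi1 + size_nf pi2 /\
     size (onh_nf pi) = 1 + size (onh_nf pi1) + size (onh_nf pi2)) \/
  (exists m t1 (pi1 : SNF m t1) k, m.+1 = n /\ 1 <= k <= size (onh_nf pi1) /\
     t = ins (nth hd0 (onh_nf pi1) k.-1) /\
     size_nf pi = 1 + size_nf pi1 /\ size (onh_nf pi) = k + 1).

Lemma closed_nf k q (q1 : SNF k q) : k = 0 -> exists t2 (pi2 : SNF 1 t2),
  q = Lam t2 /\ size_nf q1 = size_nf pi2 /\ size (onh_nf q1) = size (onh_nf pi2).
Proof.
case: q1 => [i p pn | i p p'] Hi.
- by have := pos_neu pn; lia.
- subst i; exists p, p'; by rewrite /= size_map.
Qed.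

Lemma onh_neu_head {n p} (pi : SNeu n p) : exists l, onh_neu pi = (Hole, p) :: l.
Proof. by case: pi => [|j k t u p1 q1] /=; eexists. Qed.

Lemma nth_shift (a : handle) (g f : handle -> handle) l0 l2 k idx :
  1 <= k <= size l2 -> idx = (size l0 + k.-1).+1 ->
  nth hd0 (a :: map g l0 ++ map f l2) idx = f (nth hd0 l2 k.-1).
Proof.
move=> Hk ->.
rewrite -(size_map g l0).
rewrite /= nth_cat ltnNge leq_addr /= addKn (nth_map hd0) //; lia.
Qed.

Lemma nth_shift2 (a : handle) (f : handle -> handle) l X k :
  1 <= k <= size l ->
  nth hd0 (a :: map f l ++ X) k = f (nth hd0 l k.-1).
Proof.
move=> Hk. case: k Hk => [|k] Hk //=.
rewrite nth_cat size_map ifT; last lia.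
rewrite (nth_map hd0) //; lia.
Qed.

Ltac gsz := change (prod ctx tm) with handle in *; repeat match goal with
 | |- context [size_neu ?x] => let n := fresh "sz" in set n := size_neu x in *; clearbody n
 | |- context [size_nf ?x] => let n := fresh "sz" in set n := size_nf x in *; clearbody n
 | |- context [size (onh_neu ?x)] => let n := fresh "sz" in set n := size (onh_neu x) in *; clearbody n
 | |- context [size (onh_nf ?x)] => let n := fresh "sz" in set n := size (onh_nf x) in *; clearbody n
 | H : context [size_neu ?x] |- _ => let n := fresh "sz" in set n := size_neu x in *; clearbody n
 | H : context [size_nf ?x] |- _ => let n := fresh "sz" in set n := size_nf x in *; clearbody n
 | H : context [size (onh_neu ?x)] |- _ => let n := fresh "sz" in set n := size (onh_neu x) in *; clearbody n
 | H : context [size (onh_nf ?x)] |- _ => let n := fresh "sz" in set n := size (onh_nf x) in *; clearbody n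
 end; lia.
Combined Scheme both_ind from neu_ind, nf_ind.

Lemma D_all :
  (forall n t (pi : SNeu n t), Dneu pi) /\ (forall n t (pi : SNF n t), Dnf pi).
Proof.
  apply: (both_ind (fun n t pi => Dneu pi) (fun n t pi => Dnf pi)).
  - by left.
  - move=> j k p q p1 IHp q1 IHq.
    have Hj := pos_neu p1.
    have [k0|kpos] := posnP k.
    + subst k. case: IHp => [[Ep [Ej [Hs Ho]]] | [[m [t1 [t2 [pi1 [pi2 [Hm [Ep [Hs Ho]]]]]]]] | [m [t1 [pi1 [kk [Hm [Hk [Ep [Hs Ho]]]]]]]]]].
      * subst p j. have [t2 [pi2 [Eq [Hs2 Ho2]]]] := closed_nf _ _ q1 erefl.
        right; left. exists 1, Var, t2, rule_v, pi2. split; first by [].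
        split; first by rewrite Eq.
        rewrite /= size_cat !size_map /=. rewrite Hs Ho Hs2 Ho2; split; gsz.
      * right; left. exists (m + 0), (App t1 q), t2, (rule_a pi1 q1), pi2.
        split; first gsz.
        have Ht1 := nfv_neu pi1.
        split.
          rewrite /= Ht1 ifT; last lia.
          by rewrite Ep addn0.
        rewrite /= !size_cat !size_map /=. split; gsz.
      * right; right. exists (m + 0), (App t1 q), (rule_a pi1 q1), (1 + size (onh_nf q1) + kk).
        split; first gsz.
        rewrite /= !size_cat !size_map /=.
        split; first gsz.
        split; last by split; gsz.
        rewrite (@nth_shift _ _ _ _ _ kk); try gsz.
        by rewrite Ep /ins /=.
    + move: (IHq kpos) => [[Eq [Ek [Hs Ho]]] | [[m [t1 [t2 [pi1 [pi2 [Hm [Eq [Hs Ho]]]]]]]] | [m [t1 [pi1 [kk [Hm [Hk [Eq [Hs Ho]]]]]]]]]].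
      * subst q k. right; right. exists j, p, p1, 1.
        have [l El] := onh_neu_head p1.
        split; first gsz. rewrite El /=. split; first by [].
        split; first by [].
        rewrite cats0 size_map. split; gsz.
      * have kF : (k == 0) = false by lia.
        right; left. exists (j + m), (App p t1), t2, (rule_a p1 pi1), pi2.
        split; first gsz.
        split.
          rewrite /= (nfv_neu p1). have -> : ((j + k).-1 < j) = false by lia.
          have -> : (j + k).-1 - j = k.-1 by lia.
          by rewrite Eq.
        have mF : (m == 0) = false by lia.
        rewrite /= !size_cat !size_map /= kF mF /=. split; gsz.
      * have kF : (k == 0) = false by lia.
        right; right. exists (j + m), (App p t1), (rule_a p1 pi1), kk.+1.
        split; first gsz.
        rewrite /= !size_cat !size_map /= kF.
        split; first gsz.
        set X := (if _ then _ else _). split; last by split; rewrite /= ?addn0; gsz.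
        rewrite nth_shift2 // Eq /ins /=. by [].
  - move=> i p pn IH Hi.
    case: IH => [[Ep [Ej [Hs Ho]]] | [[m [t1 [t2 [pi1 [pi2 [Hm [Ep [Hs Ho]]]]]]]] | [m [t1 [pi1 [kk [Hm [Hk [Ep [Hs Ho]]]]]]]]]].
    + left. rewrite /= Hs. by [].
    + right; left. exists m, t1, t2, (rule_s pi1), pi2. rewrite /=. split => //; split => //; split; gsz.
    + right; right. exists m, t1, (rule_s pi1), kk. rewrite /=. split => //; split => //; split => //; split; gsz.
  - move=> i p p' IH Hi.
    case: (IH isT) => [[Ep [Ej [Hs Ho]]] | [[m [t1 [t2 [pi1 [pi2 [Hm [Ep [Hs Ho]]]]]]]] | [m [t1 [pi1 [kk [Hm [Hk [Ep [Hs Ho]]]]]]]]]].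
    + lia.
    + subst m. right; left. exists i, (Lam t1), t2, (rule_l pi1), pi2.
      split => //. split; first by rewrite /= prednK // Ep. rewrite /= size_map. split; [exact Hs | by rewrite size_map Ho].
    + case: m pi1 Hm Hk Ep Hs Ho => [|m'] pi1 Hm Hk Ep Hs Ho; first gsz.
      right; right. exists m', (Lam t1), (rule_l pi1), kk.
      rewrite /= size_map. split; first gsz. split; first by [].
      split; last by split; [exact Hs | rewrite size_map Ho].
      rewrite (nth_map hd0); last gsz. by rewrite Ep.
Qed.

Fixpoint la (t : tm) : bool :=
  match t with
  | Var => false
  | App a b => if nfv b == 0 then la a else match b with Var => true | _ => la b end
  | Lam a => la a
  end.

Lemma nfv_repl t j s : j < nfv t -> nfv (repl j t s) = nfv t - 1 + nfv s.
Proof.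
elim: t j => [|a IHa b IHb|a IHa] j /= Hj.
- have -> : j = 0 by lia. by [].
- case: ifP => H /=.
  + rewrite IHa //; lia.
  + move/negbT: H; rewrite -leqNgt => H. rewrite IHb; lia.
- rewrite IHa; lia.
Qed.

Lemma repl_nvar t j s : j < nfv t -> s <> Var -> repl j t s <> Var.
Proof.
case: t => [|a b|a] /= Hj Hv.
- by have -> : j = 0 by lia.
- by case: ifP.
- by [].
Qed.

Lemma la_repl t j s : j.+1 = nfv t -> 0 < nfv s -> s <> Var -> la (repl j t s) = la s.
Proof.
elim: t j => [|a IHa b IHb|a IHa] j /= Hj Hs Hv.
- by have -> : j = 0 by lia.
- case: ifP => H /=.
  + have -> : nfv b == 0 by lia. apply: IHa => //; lia.
  + move/negbT: H; rewrite -leqNgt => H.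
    rewrite nfv_repl; last lia.
    have -> : (nfv b - 1 + nfv s == 0) = false by lia.
    have E : repl (j - nfv a) b s <> Var by apply: repl_nvar => //; lia.
    have R : la (repl (j - nfv a) b s) = la s by apply: IHb => //; lia.
    by case: (repl (j - nfv a) b s) E R.
- apply: IHa => //; lia.
Qed.

Fixpoint allP (P : handle -> Prop) (l : seq handle) : Prop :=
  match l with [::] => True | h :: l => P h /\ allP P l end.

Lemma allP_cat P l1 l2 : allP P l1 -> allP P l2 -> allP P (l1 ++ l2).
Proof. elim: l1 => //= h l IH [? ?] ?; split; auto. Qed.

Lemma allP_map P f l : allP (fun h => P (f h)) l -> allP P (map f l).
Proof. elim: l => //= h l IH [? ?]; split; auto. Qed.

Lemma sub_allP (P Q : handle -> Prop) l : (forall h, P h -> Q h) -> allP P l -> allP Q l.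
Proof. move=> HPQ; elim: l => //= h l IH [? ?]; split; auto. Qed.

Lemma allP_nth P l k : allP P l -> k < size l -> P (nth hd0 l k).
Proof. elim: l k => //= h l IH [|k] [? ?] //= Hk. apply: IH => //. Qed.

Definition G (p : tm) (h : handle) : Prop :=
  plug h.1 h.2 = p /\ nfv (ins h) = (nfv p).+1 /\ la (ins h) = true.

Lemma la_app_r a b : nfv b != 0 -> la b = true -> la (App a b) = true.
Proof. move=> /negbTE /= -> ->. by case: b. Qed.

Lemma G_all :
  (forall n t (pi : SNeu n t), allP (G t) (onh_neu pi)) /\
  (forall n t (pi : SNF n t), allP (G t) (onh_nf pi)).
Proof.
apply: (both_ind (fun n t pi => allP (G t) (onh_neu pi)) (fun n t pi => allP (G t) (onh_nf pi))).
- by rewrite /= /G /ins /=.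
- move=> j k p q p1 IHp q1 IHq /=. split.
    by rewrite /G /ins /= addn1.
  apply: allP_cat.
    apply: allP_map. move: IHq; apply: sub_allP => h [E1 [E2 E3]].
    rewrite /G /ins /= in E2 E3 *. rewrite E1. split => //. split; first by rewrite E2 addnS.
    apply: la_app_r => //. by rewrite E2.
  have Hq := nfv_nf q1.
  case: eqP => // k0. apply: allP_map. move: IHp; apply: sub_allP => h [E1 [E2 E3]].
  rewrite /G /ins /= in E2 E3 *. rewrite E1 Hq k0 /=. split => //. split; first by rewrite E2 !addn0.
  by [].
- by move=> i p pn.
- move=> i p p' IH /=. apply: allP_map. move: IH; apply: sub_allP => h [E1 [E2 E3]].
  rewrite /G /ins /= in E2 E3 *. rewrite E1. split => //. split => //.
  rewrite E2 (nfv_nf p') /=. by [].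
Qed.

Lemma existence n t (pi : SNF n t) : n = 1 ->
    (t = Var /\ size_nf pi = 1 /\ size (onh_nf pi) = 1) \/
    (exists (t1 t2 : tm) (pi1 : SNF 1 t1) (pi2 : SNF 1 t2),
        t = FO t1 t2 /\
        size_nf pi = size_nf pi1 + size_nf pi2 /\
        size (onh_nf pi) = 1 + size (onh_nf pi1) + size (onh_nf pi2)) \/
    (exists (t1 : tm) (pi1 : SNF 1 t1) (k : nat),
        1 <= k <= size (onh_nf pi1) /\
        t = VO k pi1 /\
        size_nf pi = 1 + size_nf pi1 /\
        size (onh_nf pi) = k + 1).
Proof.
case: pi => [i p pn | i p p'] Hi; subst i.
- case: (D_all.1 _ _ pn) => [[Ep [Ej [Hs Ho]]] | [[m [t1 [t2 [pi1 [pi2 [Hm [Ep [Hs Ho]]]]]]]] | [m [t1 [pi1 [kk [Hm [Hk [Ep [Hs Ho]]]]]]]]]].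
  + left. by rewrite /= Hs Ho Ep.
  + subst m. right; left. exists t1, t2, (rule_s pi1), pi2. rewrite /= Hs Ho Ep. split; first by []. split; last by []. by rewrite addSn.
  + have m0 : m = 0 by lia. subst m. by have := pos_neu pi1.
- case: (D_all.2 _ _ p' isT) => [[Ep [Ej [Hs Ho]]] | [[m [t1 [t2 [pi1 [pi2 [Hm [Ep [Hs Ho]]]]]]]] | [m [t1 [pi1 [kk [Hm [Hk [Ep [Hs Ho]]]]]]]]]].
  + by [].
  + subst m. right; left. exists (Lam t1), t2, (rule_l pi1), pi2.
    split; first by rewrite Ep.
    split; first exact Hs. by rewrite /= !size_map Ho.
  + have m1 : m = 1 by lia. subst m. right; right. exists t1, pi1, kk.
    split => //. split; first by rewrite Ep.
    split; first exact Hs. by rewrite /= size_map Ho.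
Qed.

Theorem theorem4p12 (t : tm) (pi : SNF 1 t) :
  exactly_one3
    (t = Var /\ size_nf pi = 1 /\ size (onh_nf pi) = 1)
    (exists (t1 t2 : tm) (pi1 : SNF 1 t1) (pi2 : SNF 1 t2),
        t = FO t1 t2 /\
        size_nf pi = size_nf pi1 + size_nf pi2 /\
        size (onh_nf pi) = 1 + size (onh_nf pi1) + size (onh_nf pi2))
    (exists (t1 : tm) (pi1 : SNF 1 t1) (k : nat),
        1 <= k <= size (onh_nf pi1) /\
        t = VO k pi1 /\
        size_nf pi = 1 + size_nf pi1 /\
        size (onh_nf pi) = k + 1).
Proof.
split; first exact: existence.
split.
  move=> [[E0 _] [t1 [t2 [pi1 [pi2 [E _]]]]]].
  move: E; rewrite E0 /FO. case: (t1) => [|a b|a] //=. by case: ifP.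
split.
  by move=> [[E0 _] [t1 [pi1 [k [_ [E _]]]]]]; rewrite E0 in E.
move=> [[t1 [t2 [pi1 [pi2 [E1 _]]]]] [t1' [pi1' [k [Hk [E2 _]]]]]].
have L1 : la t = false.
  rewrite E1 /FO la_repl.
  - by rewrite /= (nfv_nf pi2).
  - by rewrite (nfv_nf pi1).
  - by rewrite /= (nfv_nf pi2).
  - by [].
have L2 : la t = true.
  rewrite E2 /VO /=.
  have := @allP_nth _ _ k.-1 (G_all.2 _ _ pi1') ltac:(lia).
  by move=> [_ [_ ->]].
by rewrite L1 in L2.
Qed.
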